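(* Let $\mathcal M$ be a map in class $2_{\{0,1\}}$ with underlying graph $\Gamma$. Then the boundaries of the faces of $\mathcal M$ are $\mathrm{Aut}(\mathcal M)$-symmetric consistent cycles of $\Gamma$.
   Context: A map is a $2$-cell embedding of a connected simple graph $\Gamma$ (its underlying graph) in a closed surface; the components of the complement are the faces. All maps considered are polytopal: flags (triangles of the barycentric subdivision) correspond bijectively to incident triples (vertex, edge, face). For a flag $\Phi$ and $i\in\{0,1,2\}$, $\Phi^i$ denotes the unique flag differing from $\Phi$ exactly in its vertex ($i=0$), edge ($i=1$) or face ($i=2$). $\mathrm{Aut}(\mathcal M)$ is the group of automorphisms of $\Gamma$ mapping faces to faces; it acts on flags. A map is in class $2_{\{0,1\}}$ if $\mathrm{Aut}(\mathcal M)$ has exactly two orbits on flags and, for every flag $\Phi$, the flags $\Phi^0$ and $\Phi^1$ lie in the orbit of $\Phi$ while $\Phi^2$ does not. (For such maps $\mathrm{Aut}(\mathcal M)$ acts arc-transitively on $\Gamma$.) For an arc-transitive group $G\le \mathrm{Aut}(\Gamma)$, a directed cycle $(v_0,\ldots,v_{r-1})$ is $G$-consistent if some $g\in G$ maps each $v_i$ to $v_{i+1}$ (indices mod $r$); an undirected cycle is $G$-consistent if both its orientations are, and it is $G$-symmetric if moreover some element of $G$ maps one orientation to the other. *)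

(* Defs.v *)
From mathcomp Require Import all_boot fingroup perm.
Set Implicit Arguments. Unset Strict Implicit. Unset Printing Implicit Defensive.

Section Maps.
Variables (V F : finType) (adj : rel V) (bnd : F -> seq V).

(* A cycle of the graph, given as the cyclic sequence of its vertices
   (directed: the orientation is the order of the sequence). *)
Definition is_cycle (c : seq V) : bool :=
  [&& 2 < size c, uniq c & path.cycle adj c].

Definition face_has_edge (f : F) (x y : V) : bool :=
  (x \in bnd f) && ((next (bnd f) x == y) || (prev (bnd f) x == y)).

Definition link (v : V) (f g : F) : bool :=
  [exists w, face_has_edge f v w && face_has_edge g v w] && (f != g).

(* Polytopal map: a connected simple graph, a finite set of faces whose
   boundaries are cycles of the graph, every edge on exactly two faces, and
   around every vertex the faces form a single rotation (closed surface). *)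
Definition polytopal_map : Prop :=
  [/\ symmetric adj /\ irreflexive adj,
      (forall x y, connect adj x y) /\ (exists x y, adj x y),
      (forall f, is_cycle (bnd f)),
      (forall x y, adj x y -> #|[set f | face_has_edge f x y]| = 2) &
      (forall v f g, v \in bnd f -> v \in bnd g -> connect (link v) f g)].

(* Two cyclic sequences represent the same undirected cycle. *)
Definition same_cycle (c d : seq V) : Prop :=
  exists k, d = rot k c \/ d = rot k (rev c).

(* (g, s) is an automorphism of the map: g an automorphism of the graph and
   s the induced permutation of faces (faces are mapped to faces). *)
Definition is_map_aut (g : {perm V}) (s : {perm F}) : Prop :=
  (forall x y, adj (g x) (g y) = adj x y) /\
  (forall f, same_cycle (map g (bnd f)) (bnd (s f))).

(* Flags (v, w, f): v a vertex, e = {v,w} an edge, f a face, all incident. *)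
Definition flag := (V * V * F)%type.
Definition is_flag (X : flag) : Prop :=
  let: (v, w, f) := X in adj v w /\ face_has_edge f v w.

Definition act_flag (g : {perm V}) (s : {perm F}) (X : flag) : flag :=
  let: (v, w, f) := X in (g v, g w, s f).

Definition same_orbit (X Y : flag) : Prop :=
  exists g s, is_map_aut g s /\ act_flag g s X = Y.

Definition flag_adj (i : 'I_3) (X Y : flag) : Prop :=
  let: (v, w, f) := X in let: (v', w', f') := Y in
  match val i with
  | 0 => [/\ v' = w, w' = v & f' = f]
  | 1 => [/\ v' = v, f' = f, w' != w & face_has_edge f v w']
  | _ => [/\ v' = v, w' = w, f' != f & face_has_edge f' v w]
  end.

Definition class2_01 : Prop :=
  [/\ (exists X Y, [/\ is_flag X, is_flag Y, ~ same_orbit X Y &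
          forall Z, is_flag Z -> same_orbit X Z \/ same_orbit Y Z]),
      (forall X Y, is_flag X -> flag_adj (inord 0) X Y -> same_orbit X Y),
      (forall X Y, is_flag X -> flag_adj (inord 1) X Y -> same_orbit X Y) &
      (forall X Y, is_flag X -> flag_adj (inord 2) X Y -> ~ same_orbit X Y)].

(* G = Aut(M), viewed as a group of automorphisms of the graph. *)
Definition in_aut (g : {perm V}) : Prop := exists s, is_map_aut g s.

Definition consistent_dcycle (c : seq V) : Prop :=
  exists g, in_aut g /\ map g c = rot 1 c.

(* undirected cycle: both orientations consistent *)
Definition consistent_cycle (c : seq V) : Prop :=
  is_cycle c /\ consistent_dcycle c /\ consistent_dcycle (rev c).

Definition symmetric_cycle (c : seq V) : Prop :=
  consistent_cycle c /\
  exists g, in_aut g /\ exists k, map g c = rot k (rev c).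

End Maps.

(* Main.v *)
Require Import Defs.
From mathcomp Require Import all_boot fingroup perm.
Set Implicit Arguments. Unset Strict Implicit. Unset Printing Implicit Defensive.

Lemma rot_rot_ex (T : Type) (j k : nat) (a : seq T) : exists m, rot j (rot k a) = rot m a.
Proof.
case: (leqP j (size a)) => hj; last by exists k; rewrite rot_oversize ?size_rot // ltnW.
case: (leqP k (size a)) => hk; last by exists j; rewrite (@rot_oversize _ k) // ltnW.
by rewrite rot_add_mod //; eexists.
Qed.

Lemma rev_rot_ex (T : Type) (k : nat) (a : seq T) : exists m, rev (rot k a) = rot m (rev a).
Proof. by rewrite rev_rot /rotr; eexists. Qed.

Lemma same_cycle_refl (V : finType) (a : seq V) : same_cycle a a.
Proof. by exists 0; left; rewrite rot0. Qed.

Lemma same_cycle_rev (V : finType) (a : seq V) : same_cycle a (rev a).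
Proof. by exists 0; right; rewrite rot0. Qed.

Lemma same_cycle_sym (V : finType) (a b : seq V) : same_cycle a b -> same_cycle b a.
Proof.
case=> k [->|->].
  by exists (size (rot k a) - k); left; rewrite -/(rotr k _) rotK.
by exists k; right; rewrite -rev_rotr rotK revK.
Qed.

Lemma same_cycle_trans (V : finType) (a b c : seq V) :
  same_cycle a b -> same_cycle b c -> same_cycle a c.
Proof.
case=> k [->|->] [j [->|->]].
- by have [m ->] := rot_rot_ex j k a; exists m; left.
- have [m ->] := rev_rot_ex k a; have [m' ->] := rot_rot_ex j m (rev a).
  by exists m'; right.
- by have [m ->] := rot_rot_ex j k (rev a); exists m; right.
- have [m ->] := rev_rot_ex k (rev a); rewrite revK.
  by have [m' ->] := rot_rot_ex j m a; exists m'; left.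
Qed.

Lemma same_cycle_map (V : finType) (g : V -> V) (a b : seq V) :
  same_cycle a b -> same_cycle (map g a) (map g b).
Proof. by case=> k [->|->]; exists k; [left|right]; rewrite map_rot ?map_rev. Qed.

Lemma aut_comp (V F : finType) (adj : rel V) (bnd : F -> seq V) g1 s1 g2 s2 :
  is_map_aut adj bnd g1 s1 -> is_map_aut adj bnd g2 s2 ->
  is_map_aut adj bnd (g1 * g2)%g (s1 * s2)%g.
Proof.
move=> [A1 B1] [A2 B2]; split=> [x y|f]; first by rewrite !permM A2 A1.
rewrite permM.
have -> : map (g1 * g2)%g (bnd f) = map g2 (map g1 (bnd f)).
  by rewrite -map_comp; apply: eq_map => x; rewrite permM.
exact: same_cycle_trans (same_cycle_map g2 (B1 f)) (B2 _).
Qed.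

Lemma orbit_trans (V F : finType) (adj : rel V) (bnd : F -> seq V) X Y Z :
  same_orbit adj bnd X Y -> same_orbit adj bnd Y Z -> same_orbit adj bnd X Z.
Proof.
move=> [g1 [s1 [H1 E1]]] [g2 [s2 [H2 E2]]].
exists (g1 * g2)%g, (s1 * s2)%g; split; first exact: aut_comp.
by move: X E1 E2 => [[v w] f] <- <- /=; rewrite !permM.
Qed.

Lemma nth_rot0 (T : Type) (x0 : T) (k : nat) (d : seq T) :
  k < size d -> nth x0 (rot k d) 0 = nth x0 d k.
Proof.
move=> hk; rewrite /rot nth_cat size_drop subn_gt0 hk nth_drop addn0 //.
Qed.

Lemma fhe_sym (V F : finType) (bnd : F -> seq V) f x y :
  uniq (bnd f) -> face_has_edge bnd f x y -> face_has_edge bnd f y x.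
Proof.
move=> U /andP[xa /orP[/eqP<-|/eqP<-]]; apply/andP; split.
- by rewrite mem_next.
- by rewrite prev_next // eqxx orbT.
- by rewrite mem_prev.
- by rewrite next_prev // eqxx.
Qed.

Lemma fhe_adj (V F : finType) (adj : rel V) (bnd : F -> seq V) f x y :
  symmetric adj -> is_cycle adj (bnd f) -> face_has_edge bnd f x y -> adj x y.
Proof.
move=> sym /and3P[_ U C] /andP[xa /orP[/eqP<-|/eqP<-]].
  exact: next_cycle.
rewrite sym; have := next_cycle C (_ : prev (bnd f) x \in bnd f).
by rewrite next_prev // mem_prev; apply.
Qed.

Lemma next_same (V F : finType) (bnd : F -> seq V) f d x :
  uniq (bnd f) -> same_cycle (bnd f) d -> x \in d -> face_has_edge bnd f x (next d x).
Proof.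
move=> U [k [->|->]] xd; apply/andP.
  by rewrite mem_rot in xd; rewrite next_rot // eqxx.
rewrite mem_rot mem_rev in xd; rewrite next_rot ?rev_uniq // next_rev // eqxx orbT.
by [].
Qed.

Lemma rot1 (V F : finType) (adj : rel V) (bnd : F -> seq V) :
  polytopal_map adj bnd -> class2_01 adj bnd -> forall f d,
  same_cycle (bnd f) d -> exists g, in_aut adj bnd g /\ map g d = rot 1 d.
Proof.
move=> [[sym irr] _ cyc _ _] [_ C0 C1 _] f d hd.
have /and3P[sz U _] := cyc f.
have [Ud szd memd] : [/\ uniq d, 2 < size d & d =i bnd f].
  by case: hd => k [->|->]; split; rewrite ?rot_uniq ?rev_uniq ?size_rot ?size_rev // => x;
     rewrite mem_rot ?mem_rev.
have hn := next_same U hd.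
case Ed: d szd Ud => [|d0 [|d1 [|d2 r]]] // _ Ud'.
have n0 : next d d0 = d1 by rewrite Ed /= eqxx.
have n1 : next d d1 = d2.
  move: Ud'; rewrite Ed /= inE => /andP[/norP[/eqP h _] _].
  by rewrite eq_sym (introF eqP h) eqxx.
have d0d : d0 \in d by rewrite Ed inE eqxx.
have d1d : d1 \in d by rewrite Ed !inE eqxx orbT.
have f01 := hn _ d0d; rewrite n0 in f01.
have f12 := hn _ d1d; rewrite n1 in f12.
have f10 := fhe_sym U f01.
have a01 := fhe_adj sym (cyc f) f01.
have a10 := fhe_adj sym (cyc f) f10.
have d20 : d2 != d0.
  by move: Ud'; rewrite /= !inE => /andP[/norP[_ /norP[h _]] _]; rewrite eq_sym.
have oXY : same_orbit adj bnd (d0, d1, f) (d1, d0, f).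
  apply: C0; first by split.
  rewrite /flag_adj (_ : \val (inord 0 : 'I_3) = 0); last exact: inordK.
  by [].
have oYZ : same_orbit adj bnd (d1, d0, f) (d1, d2, f).
  apply: C1; first by split.
  rewrite /flag_adj (_ : \val (inord 1 : 'I_3) = 1); last exact: inordK.
  by split.
have [g [s [[A B] E]]] := orbit_trans oXY oYZ.
case: E => g0 g1 sf.
exists g; split; first by exists s.
have : same_cycle d (map g d).
  apply: same_cycle_trans (same_cycle_sym hd) _.
  apply: same_cycle_sym; apply: same_cycle_trans (same_cycle_map g (same_cycle_sym hd)) _.
  by rewrite -{2}sf.
have Em : map g d = d1 :: d2 :: map g (d2 :: r) by rewrite Ed /= g0 g1.
have sz1 : 1 < size d by rewrite Ed.
have Ud : uniq d by rewrite Ed.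
case=> k [] E.
- case: (ltnP k (size d)) => hk; last first.
    move: E; rewrite rot_oversize // Em Ed => -[h].
    by move: Ud'; rewrite /= h inE eqxx.
  have : nth d0 d k = nth d0 d 1 by rewrite -nth_rot0 // -E Em Ed.
  move/eqP; rewrite nth_uniq //.
  by move/eqP => hk1; rewrite -Ed E hk1.
- have : next (map g d) d1 = d2 by rewrite Em /= eqxx.
  rewrite E next_rot ?rev_uniq // (next_rev Ud) -n0 (prev_next Ud) => h.
  by rewrite h eqxx in d20.
Qed.

Theorem lemma2p5 (V F : finType) (adj : rel V) (bnd : F -> seq V) :
  polytopal_map adj bnd ->
  class2_01 adj bnd ->
  forall f : F, symmetric_cycle adj bnd (bnd f).
Proof.
move=> P C f.
have [[sym irr] _ cyc _ _] := P.
have [_ C0 _ _] := C.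
split.
  split; first exact: cyc.
  split.
    exact: rot1 P C f _ (same_cycle_refl _).
  exact: rot1 P C f _ (same_cycle_rev _).
have /and3P[sz U _] := cyc f.
have hn := next_same U (same_cycle_refl (bnd f)).
case Ed: (bnd f) sz U hn => [|d0 [|d1 [|d2 r]]] // _ Ud hn.
set d := [:: d0, d1, d2 & r] in Ud hn *.
have n0 : next d d0 = d1 by rewrite /d /= eqxx.
have n1 : next d d1 = d2.
  move: Ud; rewrite /d /= inE => /andP[/norP[/eqP h _] _].
  by rewrite eq_sym (introF eqP h) eqxx.
have d0d : d0 \in d by rewrite inE eqxx.
have d1d : d1 \in d by rewrite !inE eqxx orbT.
have f01 := hn _ d0d; rewrite n0 in f01.
have a01 := fhe_adj sym (cyc f) f01.
have d20 : d2 != d0.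
  by move: Ud; rewrite /= !inE => /andP[/norP[_ /norP[h _]] _]; rewrite eq_sym.
have oXY : same_orbit adj bnd (d0, d1, f) (d1, d0, f).
  apply: C0; first by split.
  rewrite /flag_adj (_ : \val (inord 0 : 'I_3) = 0); last exact: inordK.
  by [].
have [g [s [[A B] E]]] := oXY.
case: E => g0 g1 sf.
exists g; split; first by exists s.
have : same_cycle d (map g d).
  apply: same_cycle_sym; have := B f; rewrite sf Ed; exact.
case=> k [] E; last by exists k.
exfalso.
have := next_map (@perm_inj _ g) Ud d1.
rewrite E next_rot // g1 n0 n1 -g0 => /perm_inj h.
by rewrite h eqxx in d20.
Qed.
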